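(* With $\mathsf{S}_-(\mathsf{H},\zeta)$ and $\mathsf{S}_+(\mathsf{H},\zeta)$ the odd and even Hopf subalgebras, one has: (1) $\mathrm{S}(\mathrm{O}(V))\subseteq\mathsf{S}_-(\mathrm{S}(V),\zeta_{\mathrm{S}(V)})$ and $\mathrm{S}(\mathrm{E}(V))\subseteq\mathsf{S}_+(\mathrm{S}(V),\zeta_{\mathrm{S}(V)})$; (2) $\mathrm{T}(\mathrm{O}(V))\subseteq\mathsf{S}_-(\mathrm{T}(V),\zeta_{\mathrm{T}(V)})$ and $\mathrm{T}(\mathrm{E}(V))\subseteq\mathsf{S}_+(\mathrm{T}(V),\zeta_{\mathrm{T}(V)})$; (3) $\mathrm{Sym}(\mathrm{O}(V))\subseteq\mathsf{S}_-(\mathrm{Sym}(V),\zeta_{\mathrm{Sym}(V)})$ and $\mathrm{Sym}(\mathrm{E}(V))\subseteq\mathsf{S}_+(\mathrm{Sym}(V),\zeta_{\mathrm{Sym}(V)})$.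
   Context: For a combinatorial Hopf algebra $(\mathsf{H},\zeta)$ ($\mathsf{H}$ graded connected, $\zeta$ a character), $\bar\zeta|_{\mathsf{H}_n}=(-1)^n\zeta|_{\mathsf{H}_n}$, $\zeta^{-1}=\zeta\circ\mathcal{S}$, and $\mathsf{S}_-(\mathsf{H},\zeta)$ (resp. $\mathsf{S}_+$) is the largest subcoalgebra in $\ker(\overline{\zeta^{-1}}-\zeta)$ (resp. $\ker(\bar\zeta-\zeta)$). $V$ is a graded vector space with homogeneous basis $\{v_i\}$. $\mathrm{S}(V)$ is the shuffle algebra on words $v_\alpha$ (product: sum over all shuffles of the two words, i.e. interleavings preserving order within each; coproduct: deconcatenation), with character $\zeta_{\mathrm{S}(V)}=\zeta_{\mathrm{QSym}}\circ\Phi_{\mathrm{S}(V)}$ where $\Phi_{\mathrm{S}(V)}(v_\alpha)=S_{(\deg v_{\alpha_1},\dots,\deg v_{\alpha_\ell})}$ (shuffle basis of $\mathrm{QSym}$) and $\zeta_{\mathrm{QSym}}(f)=f(1,0,0,\dots)$. $\mathrm{T}(V)$ is the tensor algebra (concatenation product, $v_i$ primitive) with character $\zeta_{\mathrm{T}(V)}(v_i)=1/\deg(v_i)$ extended multiplicatively; $\mathrm{Sym}(V)=\mathrm{T}(V)/\langle v_iv_j-v_jv_i\rangle$ with induced character $\zeta_{\mathrm{Sym}(V)}(\overline{v_i})=1/\deg(v_i)$. $\mathrm{S}(\mathrm{O}(V))$, $\mathrm{T}(\mathrm{O}(V))$, $\mathrm{Sym}(\mathrm{O}(V))$ (resp.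 with $\mathrm{E}$) are spanned by the words (classes) all of whose letters have odd (resp. even) degree. *)

(* Defs.v *)
From HB Require Import structures.
From mathcomp Require Import all_boot all_order all_algebra.
From mathcomp Require Import finmap multiset.
From mathcomp.multinomials Require Import monalg.

Set Implicit Arguments.
Unset Strict Implicit.
Unset Printing Implicit Defensive.

Import GRing.Theory.
Local Open Scope ring_scope.

(* A coalgebra is presented as the free
   vector space {malg F[B]} on a basis B (finitely supported functions
   B -> F), with coproduct given on basis elements by
   cop b = list (with multiplicity) of the pairs (b1,b2) such that
   Delta b = \sum b1 (x) b2.  The tensor square is {malg F[(B * B)%type]}.     *)
Section BasedCoalgebra.
Variables (F : fieldType) (B : choiceType) (cop : B -> seq (B * B)).

Definition Delta (x : {malg F[B]}) : {malg F[(B * B)%type]} :=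
  \sum_(b <- msupp x) x@_b *: \sum_(p <- cop b) << p >>.

Definition tens (x y : {malg F[B]}) : {malg F[(B * B)%type]} :=
  \sum_(b <- msupp x) \sum_(c <- msupp y) << x@_b * y@_c *g (b, c) >>.

Definition is_subspace (D : {malg F[B]} -> Prop) :=
  D 0 /\ forall (a : F) x y, D x -> D y -> D (a *: x + y).

Definition is_subcoalgebra (D : {malg F[B]} -> Prop) :=
  is_subspace D /\
  forall x, D x -> exists s : seq ({malg F[B]} * {malg F[B]}),
    (forall p, p \in s -> D p.1 /\ D p.2) /\
    Delta x = \sum_(p <- s) tens p.1 p.2.

(* x belongs to the largest subcoalgebra contained in K (= the sum of
   all subcoalgebras contained in K, itself such a subcoalgebra) *)
Definition in_largest_subcoalg (K : {malg F[B]} -> Prop) (x : {malg F[B]}) :=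
  exists D, is_subcoalgebra D /\ (forall y, D y -> K y) /\ D x.

(* linear functionals, given by their values on the basis *)
Definition lin (phi : B -> F) (x : {malg F[B]}) : F :=
  \sum_(b <- msupp x) x@_b * phi b.

Definition conv (f g : B -> F) (b : B) : F :=
  \sum_(p <- cop b) f p.1 * g p.2.

Definition is_conv_inverse (eps zeta g : B -> F) :=
  (forall b, conv g zeta b = eps b) /\ (forall b, conv zeta g b = eps b).

Definition barf (deg : B -> nat) (phi : B -> F) (b : B) : F :=
  (-1) ^+ deg b * phi b.

Definition in_S_minus (deg : B -> nat) (zeta zinv : B -> F) :=
  in_largest_subcoalg (fun y => lin (barf deg zinv) y = lin zeta y).

Definition in_S_plus (deg : B -> nat) (zeta : B -> F) :=
  in_largest_subcoalg (fun y => lin (barf deg zeta) y = lin zeta y).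

End BasedCoalgebra.

Fixpoint bitseqs (n : nat) : seq bitseq :=
  if n is n'.+1 then [seq b :: s | b <- [:: true; false], s <- bitseqs n']
  else [:: [::]].

(* Words in the letters I (basis of V), deg : I -> nat.               *)
Section Words.
Variables (F : fieldType) (I : choiceType) (deg : I -> nat).

Definition wdeg (w : seq I) : nat := sumn (map deg w).

(* deconcatenation coproduct (shuffle algebra S(V)) *)
Definition cop_deconc (w : seq I) : seq (seq I * seq I) :=
  [seq (take k w, drop k w) | k <- iota 0 (size w).+1].

(* unshuffle coproduct (tensor algebra T(V), letters primitive) *)
Definition cop_unsh (w : seq I) : seq (seq I * seq I) :=
  [seq (mask m w, mask (map negb m) w) | m <- bitseqs (size w)].

Definition eps_word (w : seq I) : F := (w == [::])%:R.

Definition odd_word (w : seq I) := all (fun i => odd (deg i)) w.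
Definition even_word (w : seq I) := all (fun i => ~~ odd (deg i)) w.

Definition zeta_T (w : seq I) : F := \prod_(i <- w) (deg i)%:R^-1.

End Words.

(* QSym, in the monomial basis M_beta (beta a composition, seq nat).   *)
Section QSym.
Variable F : fieldType.

(* M_beta evaluated at (xs_1, xs_2, ..., xs_n, 0, 0, ...) *)
Fixpoint Mev (xs : seq F) (beta : seq nat) : F :=
  match beta with
  | [::] => 1
  | b :: bs => match xs with
               | [::] => 0
               | x :: xs' => x ^+ b * Mev xs' bs + Mev xs' beta
               end
  end.

Definition zeta_QSym (f : {malg F[seq nat]}) : F :=
  \sum_(beta <- msupp f) f@_beta * Mev [:: 1] beta.

(* all decompositions of a sequence into consecutive nonempty blocks *)
Fixpoint blocks (s : seq nat) : seq (seq (seq nat)) :=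
  match s with
  | [::] => [:: [::]]
  | a :: s' => [seq [:: a] :: Bl | Bl <- blocks s'] ++
               [seq (a :: head [::] Bl) :: behead Bl | Bl <- blocks s' & Bl != [::]]
  end.

(* shuffle basis of QSym (Hoffman's exponential):
   S_alpha = \sum_{I |= l(alpha)} (1/I!) M_{I[alpha]} *)
Definition shuffleS (alpha : seq nat) : {malg F[seq nat]} :=
  \sum_(Bl <- blocks alpha)
     << (\prod_(blk <- Bl) ((size blk)`!)%:R^-1) *g map sumn Bl >>.

End QSym.

(* zeta_S(V) = zeta_QSym o Phi_S(V), Phi(v_alpha) = S_(deg alpha_1,...) *)
Definition zeta_S (F : fieldType) (I : choiceType) (deg : I -> nat)
  (w : seq I) : F := zeta_QSym (shuffleS F (map deg w)).

(* Sym(V): basis = commutative monomials = multisets of letters.       *)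
Section SymV.
Local Open Scope mset_scope.
Variables (F : fieldType) (I : choiceType) (deg : I -> nat).

Definition msetdeg (m : {mset I}) : nat := sumn (map deg (enum_mset m)).

(* coproduct induced from T(V) (letters primitive) *)
Definition cop_sym (m : {mset I}) : seq ({mset I} * {mset I}) :=
  [seq (seq_mset (mask b (enum_mset m)),
        seq_mset (mask (map negb b) (enum_mset m))) | b <- bitseqs (size (enum_mset m))].

Definition eps_mon (m : {mset I}) : F := (m == mset0)%:R.

Definition odd_mon (m : {mset I}) := all (fun i => odd (deg i)) (enum_mset m).
Definition even_mon (m : {mset I}) := all (fun i => ~~ odd (deg i)) (enum_mset m).

Definition zeta_Sym (m : {mset I}) : F :=
  (\prod_(i <- enum_mset m) (deg i)%:R^-1)%R.

End SymV.

(* Main.v *)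
Require Import Defs.
From HB Require Import structures.
From mathcomp Require Import all_boot all_order all_algebra.
From mathcomp Require Import finmap multiset.
From mathcomp.multinomials Require Import monalg.
From mathcomp.algebra_tactics Require Import ring.
Set Implicit Arguments.
Unset Strict Implicit.
Unset Printing Implicit Defensive.
Import GRing.Theory.
Local Open Scope ring_scope.

Lemma filter_blocks (s : seq nat) :
  [seq Bl <- blocks s | (size Bl <= 1)%N] = if s is [::] then [:: [::]] else [:: [:: s]].
Proof.
elim: s => [//|a s IH] /=.
rewrite filter_cat filter_map /= filter_map /=.
have E1 : [seq Bl <- blocks s | (size Bl == 0)%N] = if s is [::] then [:: [::]] else [::].
  have -> : [seq Bl <- blocks s | (size Bl == 0)%N] =
            [seq Bl <- [seq Bl <- blocks s | (size Bl <= 1)%N] | (size Bl == 0)%N].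
    by rewrite -filter_predI; apply: eq_filter => Bl /=; case: (size Bl) => [|[|]].
  by rewrite IH; destruct s.
have E2 : [seq Bl <- [seq Bl <- blocks s | Bl != [::]] | (size (behead Bl)).+1 <= 1]%N =
           if s is [::] then [::] else [:: [:: s]].
  have -> : [seq Bl <- [seq Bl <- blocks s | Bl != [::]] | (size (behead Bl)).+1 <= 1]%N =
            [seq Bl <- [seq Bl <- blocks s | (size Bl <= 1)%N] | Bl != [::]].
    rewrite -!filter_predI; apply: eq_filter => Bl /=; case: Bl => [|x [|]] //=.
  by rewrite IH; destruct s.
rewrite (eq_filter (a2 := fun Bl => (size Bl == 0)%N)); last first.
  by move=> Bl /=; rewrite ltnS leqn0.
by rewrite E1 E2; clear; case: s.
Qed.

Lemma Mev1 (F : fieldType) (beta : seq nat) : Mev [:: (1 : F)] beta = (size beta <= 1)%N%:R.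
Proof. case: beta => [|b [|c bs]] //=; rewrite ?expr1n ?mulr1 ?mulr0 ?addr0 //. Qed.

Lemma lin_sumU (F : fieldType) (K T : choiceType) (phi : K -> F) (s : seq T)
  (c : T -> F) (k : T -> K) :
  let f := \sum_(x <- s) << c x *g k x >> : {malg F[K]} in
  \sum_(b <- msupp f) f@_b * phi b = \sum_(x <- s) c x * phi (k x).
Proof.
move=> f.
have -> : \sum_(b <- msupp f) f@_b * phi b = mmap (@idfun F) phi f by [].
rewrite raddf_sum; apply: eq_bigr => x _ /=; exact: mmapU.
Qed.

Lemma zeta_S_eq (F : fieldType) (I : choiceType) (deg : I -> nat) (w : seq I) :
  zeta_S F deg w = ((size w)`!)%:R^-1.
Proof.
rewrite /zeta_S /zeta_QSym /shuffleS lin_sumU.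
under eq_bigr => Bl _ do rewrite Mev1 size_map mulr_natr mulrb.
rewrite -big_mkcondr /= -big_filter filter_blocks -(size_map deg w).
case: (map deg w) => [|a s] /=; first by rewrite big_seq1 big_nil invr1.
by rewrite !big_seq1 ?mulr1.
Qed.

Section Gen.
Local Open Scope fset_scope.
Variables (F : fieldType) (B : choiceType) (cop : B -> seq (B * B)).

Definition Dq (Q : pred B) (y : {malg F[B]}) := forall b, b \in msupp y -> Q b.

Lemma Dq_subspace Q : is_subspace (Dq Q).
Proof.
split; first by move=> b; rewrite msupp0.
move=> a x y Dx Dy b /(fsubsetP (msuppD_le _ _)); rewrite in_fsetU => /orP[|/Dy //].
by move/(fsubsetP (msuppZ_le _ _))/Dx.
Qed.

Lemma malgUZ (K : choiceType) (c : F) (k : K) : << c *g k >> = c *: (<< k >> : {malg F[K]}).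
Proof. by apply/malgP => kk; rewrite mcoeffU mcoeffZ (mcoeffU k (1:F) kk) mulr_natr. Qed.

Lemma msuppU1' (k : B) : msupp (<< k >> : {malg F[B]}) = [fset k].
Proof. by rewrite msuppU oner_eq0. Qed.

Lemma tensU (c : F) (u v : B) : tens (c *: <<u>>) <<v>> = c *: << (u, v) >>.
Proof.
rewrite /tens msuppZ !msuppU1'; case: eqP => [->|_].
  by rewrite big_seq_fset0 scale0r.
rewrite !big_seq_fset1 mcoeffZ !mcoeffU !eqxx /= !mulr1; exact: malgUZ.
Qed.

Lemma DqU (Q : pred B) (c : F) u : Q u -> Dq Q (c *: << u >>).
Proof.
move=> Qu b /(fsubsetP (msuppZ_le _ _)); rewrite msuppU1' in_fset1 => /eqP -> //.
Qed.

Lemma Dq_subcoalg (Q : pred B) :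
  (forall b p, Q b -> p \in cop b -> Q p.1 /\ Q p.2) -> is_subcoalgebra cop (Dq Q).
Proof.
move=> cl; split; first exact: Dq_subspace.
move=> x Dx.
exists [seq (x@_b *: <<p.1>>, (1 : F) *: <<p.2>>) | b <- msupp x, p <- cop b]; split.
  move=> q /allpairsPdep [b [p [bx pc ->]]] /=.
  have [Q1 Q2] := cl b p (Dx b bx) pc.
  by split; apply: DqU.
rewrite big_allpairs_dep /Delta; apply: eq_bigr => b _.
rewrite scaler_sumr; apply: eq_bigr => p _ /=.
by rewrite scale1r tensU; case: p.
Qed.

Lemma Dq_lin (Q : pred B) (phi psi : B -> F) :
  (forall b, Q b -> phi b = psi b) -> forall y, Dq Q y -> lin phi y = lin psi y.
Proof.
move=> E y Dy; rewrite /lin; apply: eq_big_seq => b bx; by rewrite E // Dy.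
Qed.

Lemma in_largest_Dq (Q : pred B) (phi psi : B -> F) :
  (forall b p, Q b -> p \in cop b -> Q p.1 /\ Q p.2) ->
  (forall b, Q b -> phi b = psi b) ->
  forall x, Dq Q x -> in_largest_subcoalg cop (fun y => lin phi y = lin psi y) x.
Proof.
move=> cl E x Dx; exists (Dq Q); split; first exact: Dq_subcoalg.
by split => // y; apply: Dq_lin.
Qed.

Lemma inv_sign (eps zeta zinv : B -> F) (deg sz : B -> nat) (Q : pred B) (e : B) :
 (forall b, conv cop zeta zinv b = eps b) ->
 zeta e = 1 ->
 (forall b, Q b -> exists s1 s2, cop b = s1 ++ (e,b) :: s2 /\
     forall p, p \in s1 ++ s2 -> (sz p.2 < sz b)%N /\ Q p.2) ->
 (forall b, Q b -> \sum_(p <- cop b) zeta p.1 * ((-1)^+deg p.2 * zeta p.2) = eps b) ->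
 forall b, Q b -> zinv b = (-1)^+deg b * zeta b.
Proof.
move=> cv ze split ident b.
have [n] := ubnP (sz b); elim: n b => // n IH b /ltnSE szb Qb.
have [s1 [s2 [E H]]] := split b Qb.
have H1 := cv b; have H2 := ident b Qb.
rewrite /conv E big_cat big_cons /= in H1; rewrite E big_cat big_cons /= in H2.
have R : forall s, {subset s <= s1 ++ s2} ->
    \sum_(p <- s) zeta p.1 * zinv p.2 = \sum_(p <- s) zeta p.1 * ((-1)^+deg p.2 * zeta p.2).
  move=> s sub; apply: eq_big_seq => p /sub /H [lt Qp].
  by rewrite IH // (leq_trans lt szb).
rewrite !R in H1; last 2 first.
- by move=> p ps; rewrite mem_cat ps orbT.
- by move=> p ps; rewrite mem_cat ps.
have := etrans H1 (esym H2) => /addrI /addIr.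
by rewrite ze !mul1r.
Qed.

Lemma sign_sq (n : nat) (x : F) : (-1)^+n * ((-1)^+n * x) = x.
Proof. exact: signrMK. Qed.

End Gen.

Lemma bitseqs_cons n :
  bitseqs n.+1 = [seq true :: s | s <- bitseqs n] ++ [seq false :: s | s <- bitseqs n].
Proof. by rewrite /= cats0. Qed.

Lemma sum_masks (R : comRingType) (I : Type) (f g : I -> R) (w : seq I) :
  \sum_(m <- bitseqs (size w))
     (\prod_(i <- mask m w) f i) * (\prod_(i <- mask (map negb m) w) g i)
  = \prod_(i <- w) (f i + g i).
Proof.
elim: w => [|a w IH]; first by rewrite /= big_seq1 !big_nil mulr1.
rewrite [size _]/= bitseqs_cons big_cat !big_map big_cons /=.
under eq_bigr => m _ do rewrite big_cons -mulrA.
under [X in _ + X]eq_bigr => m _ do rewrite big_cons mulrCA.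
by rewrite -!big_distrr /= IH mulrDl.
Qed.

Lemma bitseqs_split n : exists X, bitseqs n = rcons X (nseq n false) /\
  forall m, m \in X -> size m = n /\ true \in m.
Proof.
elim: n => [|n [X [E H]]]; first by exists [::].
exists ([seq true :: s | s <- bitseqs n] ++ [seq false :: s | s <- X]); split.
  by rewrite bitseqs_cons {2}E map_rcons rcons_cat.
have sz : forall m, m \in bitseqs n -> size m = n.
  clear; elim: n => [|n IH] m /=; first by rewrite inE => /eqP ->.
  rewrite cats0 mem_cat => /orP[] /mapP [s /IH ss ->] /=; by rewrite ss.
move=> m; rewrite mem_cat => /orP[] /mapP [s ss ->] /=.
  by rewrite sz // inE eqxx.
by have [-> ts] := H s ss; rewrite inE ts orbT.
Qed.

Section W.
Variables (F : fieldType) (I : choiceType) (deg : I -> nat).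

Lemma wdeg_cons a w : wdeg deg (a :: w) = (deg a + wdeg deg w)%N.
Proof. by []. Qed.

Lemma sign_zetaT (w : seq I) :
  (-1) ^+ wdeg deg w * zeta_T F deg w = \prod_(i <- w) ((-1) ^+ deg i * (deg i)%:R^-1).
Proof.
rewrite /zeta_T; elim: w => [|a w IH]; first by rewrite !big_nil mulr1.
by rewrite wdeg_cons !big_cons exprD -IH mulrACA.
Qed.

Lemma prod_sign_odd (w : seq I) : all (fun i => odd (deg i)) w ->
  \prod_(i <- w) ((deg i)%:R^-1 + (-1) ^+ deg i * (deg i)%:R^-1) = eps_word F w.
Proof.
case: w => [|a w] /=; first by rewrite big_nil.
move=> /andP [oa _]; rewrite big_cons -signr_odd oa expr1 mulN1r subrr mul0r.
by [].
Qed.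

Lemma ident_T (w : seq I) : odd_word deg w ->
  \sum_(p <- cop_unsh w) zeta_T F deg p.1 * ((-1) ^+ wdeg deg p.2 * zeta_T F deg p.2)
  = eps_word F w.
Proof.
move=> ow; rewrite /cop_unsh big_map -prod_sign_odd // -sum_masks.
by apply: eq_bigr => m _ /=; rewrite sign_zetaT.
Qed.

Lemma split_unsh (Q : pred I) (w : seq I) :
  all Q w -> exists s1 s2, cop_unsh w = s1 ++ ([::], w) :: s2 /\
     forall p, p \in s1 ++ s2 -> (size p.2 < size w)%N /\ all Q p.2.
Proof.
move=> Qw; have [X [E H]] := bitseqs_split (size w).
exists [seq (mask m w, mask (map negb m) w) | m <- X], [::]; split.
  by rewrite /cop_unsh E map_rcons mask_false map_nseq /= mask_true // cats1.
move=> p; rewrite cats0 => /mapP [m /H [szm tm] ->] /=; split; last exact: all_mask.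
rewrite size_mask ?size_map // count_map.
have := count_predC id m; rewrite szm => <-.
rewrite (eq_count (a2 := predC id)) // -{1}(add0n (count _ m)) ltn_add2r -has_count.
by apply/hasP; exists true.
Qed.

Lemma unsh_closed (Q : pred I) (w : seq I) p :
  all Q w -> p \in cop_unsh w -> all Q p.1 /\ all Q p.2.
Proof. by move=> Qw /mapP [m _ ->]; split; apply: all_mask. Qed.

Lemma deconc_closed (Q : pred I) (w : seq I) p :
  all Q w -> p \in cop_deconc w -> all Q p.1 /\ all Q p.2.
Proof.
move=> Qw /mapP [k _ ->] /=; move: Qw; rewrite -{1}(cat_take_drop k w) all_cat.
by case/andP.
Qed.

Lemma split_deconc (Q : pred I) (w : seq I) :
  all Q w -> exists s1 s2, cop_deconc w = s1 ++ ([::], w) :: s2 /\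
     forall p, p \in s1 ++ s2 -> (size p.2 < size w)%N /\ all Q p.2.
Proof.
move=> Qw; exists [::], [seq (take k w, drop k w) | k <- iota 1 (size w)]; split.
  by rewrite /cop_deconc /= take0 drop0.
move=> p /mapP [k]; rewrite mem_iota => /andP [k1 kn] ->; split.
  rewrite size_drop /=; rewrite add1n ltnS in kn.
  by rewrite -subn_gt0 subKn.
have := deconc_closed (p := (take k w, drop k w)) Qw.
by case => //; apply/mapP; exists k => //; rewrite mem_iota /= -add1n.
Qed.

Lemma sign_odd_word (u : seq I) : odd_word deg u ->
  (-1) ^+ wdeg deg u = (-1) ^+ size u :> F.
Proof.
elim: u => [|a u IH] //= /andP [oa ou].
by rewrite wdeg_cons exprD IH // exprS -signr_odd oa expr1.
Qed.

Lemma binom_alt (n : nat) : [pchar F] =i pred0 ->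
  \sum_(k <- iota 0 n.+1) (k`!)%:R^-1 * ((-1) ^+ (n - k) * ((n - k)`!)%:R^-1)
  = (n == 0)%:R :> F.
Proof.
move=> /pcharf0P ch.
have nz : forall m, (m`!)%:R != 0 :> F by move=> m; rewrite ch -lt0n fact_gt0.
rewrite [in LHS](_ : iota 0 n.+1 = index_iota 0 n.+1); last by rewrite /index_iota subn0.
rewrite big_mkord.
have -> : (n == 0)%:R = (n`!)%:R^-1 * (-1 + 1 : F) ^+ n.
  by rewrite addNr expr0n; case: n => [|n]; rewrite ?fact0 ?invr1 ?mul1r ?mulr0.
rewrite exprDn mulr_sumr.
apply: eq_bigr => [[k]] /=; rewrite ltnS => kn _.
rewrite expr1n mulr1 -mulr_natr.
rewrite -(bin_fact kn) !natrM.
field; by rewrite !nz ch -lt0n bin_gt0 kn.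
Qed.

End W.

Section Fin.
Variables (F : fieldType) (I : choiceType) (deg : I -> nat).

Lemma all_drop_of (Q : pred I) k (w : seq I) : all Q w -> all Q (drop k w).
Proof. by rewrite -{1}(cat_take_drop k w) all_cat => /andP []. Qed.

Lemma ident_S (w : seq I) : [pchar F] =i pred0 -> odd_word deg w ->
  \sum_(p <- cop_deconc w) zeta_S F deg p.1 * ((-1) ^+ wdeg deg p.2 * zeta_S F deg p.2)
  = eps_word F w.
Proof.
move=> ch ow; rewrite /cop_deconc big_map /eps_word -size_eq0 -(binom_alt _ ch).
apply: eq_big_seq => k; rewrite mem_iota /= add0n ltnS => kn.
rewrite !zeta_S_eq sign_odd_word; last exact: all_drop_of.
by rewrite size_takel // size_drop.
Qed.

Lemma even_wdeg (w : seq I) : even_word deg w -> (-1) ^+ wdeg deg w = 1 :> F.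
Proof.
move=> ew; rewrite -signr_odd.
suff -> : odd (wdeg deg w) = false by [].
elim: w ew => [|a w IH] //= /andP [ea ew].
by rewrite wdeg_cons oddD (negbTE ea) IH.
Qed.

Local Open Scope mset_scope.

Lemma zeta_Sym_seq (s : seq I) :
  zeta_Sym F deg (seq_mset s) = \prod_(i <- s) (deg i)%:R^-1.
Proof. by rewrite /zeta_Sym; apply: perm_big; exact: perm_eq_seq_mset. Qed.

Lemma msetdeg_seq (s : seq I) : msetdeg deg (seq_mset s) = wdeg deg s.
Proof. by rewrite /msetdeg /wdeg !sumn_map; apply: perm_big; exact: perm_eq_seq_mset. Qed.

Lemma all_seq_mset (Q : pred I) (s : seq I) : all Q (enum_mset (seq_mset s)) = all Q s.
Proof. by apply: perm_all; exact: perm_eq_seq_mset. Qed.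

Lemma size_seq_mset (s : seq I) : size (enum_mset (seq_mset s)) = size s.
Proof. by apply: perm_size; exact: perm_eq_seq_mset. Qed.

Lemma seq_mset_nil : seq_mset [::] = mset0 :> {mset I}.
Proof. by apply/msetP => a; rewrite mset_seqE mset0E. Qed.

Lemma eps_mon_word (m : {mset I}) : eps_mon F m = eps_word F (enum_mset m).
Proof.
rewrite /eps_mon /eps_word; congr (_%:R).
case: eqP => [->|ne]; first by rewrite enum_mset0 eqxx.
case: eqP => // E; exfalso; apply: ne.
by rewrite -(seq_mset_id m) E seq_mset_nil.
Qed.

Lemma sym_closed (Q : pred I) (m : {mset I}) p :
  all Q (enum_mset m) -> p \in cop_sym m -> all Q (enum_mset p.1) /\ all Q (enum_mset p.2).
Proof. by move=> Qm /mapP [b _ ->] /=; rewrite !all_seq_mset; split; apply: all_mask. Qed.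

Lemma split_sym (Q : pred I) (m : {mset I}) :
  all Q (enum_mset m) -> exists s1 s2, cop_sym m = s1 ++ (mset0, m) :: s2 /\
     forall p, p \in s1 ++ s2 -> (size (enum_mset p.2) < size (enum_mset m))%N /\ all Q (enum_mset p.2).
Proof.
move=> Qm; set w := enum_mset m.
have [X [E H]] := bitseqs_split (size w).
exists [seq (seq_mset (mask b w), seq_mset (mask (map negb b) w)) | b <- X], [::]; split.
  rewrite /cop_sym -/w E map_rcons mask_false map_nseq /= mask_true // cats1.
  by rewrite seq_mset_nil seq_mset_id.
move=> p; rewrite cats0 => /mapP [b /H [szb tb] ->] /=.
rewrite all_seq_mset size_seq_mset; split; last exact: all_mask.
rewrite size_mask ?size_map // count_map.
have := count_predC id b; rewrite szb => <-.
rewrite (eq_count (a2 := predC id)) // -{1}(add0n (count _ b)) ltn_add2r -has_count.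
by apply/hasP; exists true.
Qed.

Lemma ident_Sym (m : {mset I}) : odd_mon deg m ->
  \sum_(p <- cop_sym m) zeta_Sym F deg p.1 * ((-1) ^+ msetdeg deg p.2 * zeta_Sym F deg p.2)
  = eps_mon F m.
Proof.
move=> om; rewrite eps_mon_word /cop_sym big_map -(@prod_sign_odd F I deg) // -sum_masks.
apply: eq_bigr => b _ /=; rewrite !zeta_Sym_seq msetdeg_seq.
by rewrite -sign_zetaT.
Qed.

End Fin.

Theorem mainTheorem10 (F : fieldType) (I : choiceType) (deg : I -> nat) :
  [pchar F] =i pred0 ->
  (forall i, (0 < deg i)%N) ->
  (* (1) shuffle algebra S(V) *)
  (forall zinv : seq I -> F,
     is_conv_inverse (@cop_deconc I) (@eps_word F I) (zeta_S F deg) zinv ->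
     forall x : {malg F[seq I]}, (forall w, w \in msupp x -> odd_word deg w) ->
       in_S_minus (@cop_deconc I) (wdeg deg) (zeta_S F deg) zinv x) /\
  (forall x : {malg F[seq I]}, (forall w, w \in msupp x -> even_word deg w) ->
       in_S_plus (@cop_deconc I) (wdeg deg) (zeta_S F deg) x) /\
  (* (2) tensor algebra T(V) *)
  (forall zinv : seq I -> F,
     is_conv_inverse (@cop_unsh I) (@eps_word F I) (zeta_T F deg) zinv ->
     forall x : {malg F[seq I]}, (forall w, w \in msupp x -> odd_word deg w) ->
       in_S_minus (@cop_unsh I) (wdeg deg) (zeta_T F deg) zinv x) /\
  (forall x : {malg F[seq I]}, (forall w, w \in msupp x -> even_word deg w) ->
       in_S_plus (@cop_unsh I) (wdeg deg) (zeta_T F deg) x) /\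
  (* (3) symmetric algebra Sym(V) *)
  (forall zinv : (multiset I) -> F,
     is_conv_inverse (@cop_sym I) (@eps_mon F I) (zeta_Sym F deg) zinv ->
     forall x : {malg F[(multiset I)]}, (forall m, m \in msupp x -> odd_mon deg m) ->
       in_S_minus (@cop_sym I) (msetdeg deg) (zeta_Sym F deg) zinv x) /\
  (forall x : {malg F[(multiset I)]}, (forall m, m \in msupp x -> even_mon deg m) ->
       in_S_plus (@cop_sym I) (msetdeg deg) (zeta_Sym F deg) x).
Proof.
move=> ch _.
split.
  move=> zinv [_ cv] x Dx; apply: (@in_largest_Dq _ _ _ (odd_word deg)) => //.
    by move=> b p; apply: deconc_closed.
  move=> b ob; rewrite /barf.
  rewrite (inv_sign (deg := wdeg deg) (sz := size) (Q := odd_word deg) (e := [::]) cv) //.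
  - exact: sign_sq.
  - by rewrite zeta_S_eq invr1.
  - by move=> w; apply: split_deconc.
  - by move=> w; apply: ident_S.
split.
  move=> x Dx; apply: (@in_largest_Dq _ _ _ (even_word deg)) => //.
    by move=> b p; apply: deconc_closed.
  by move=> b eb; rewrite /barf even_wdeg // mul1r.
split.
  move=> zinv [_ cv] x Dx; apply: (@in_largest_Dq _ _ _ (odd_word deg)) => //.
    by move=> b p; apply: unsh_closed.
  move=> b ob; rewrite /barf.
  rewrite (inv_sign (deg := wdeg deg) (sz := size) (Q := odd_word deg) (e := [::]) cv) //.
  - exact: sign_sq.
  - by rewrite /zeta_T big_nil.
  - by move=> w; apply: split_unsh.
  - by move=> w; apply: ident_T.
split.
  move=> x Dx; apply: (@in_largest_Dq _ _ _ (even_word deg)) => //.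
    by move=> b p; apply: unsh_closed.
  by move=> b eb; rewrite /barf even_wdeg // mul1r.
split.
  move=> zinv [_ cv] x Dx; apply: (@in_largest_Dq _ _ _ (odd_mon deg)) => //.
    by move=> b p; apply: sym_closed.
  move=> b ob; rewrite /barf.
  rewrite (inv_sign (deg := msetdeg deg) (sz := fun m => size (enum_mset m))
     (Q := odd_mon deg) (e := mset0) cv) //.
  - exact: sign_sq.
  - by rewrite /zeta_Sym enum_mset0 big_nil.
  - by move=> w; apply: split_sym.
  - by move=> w; apply: ident_Sym.
move=> x Dx; apply: (@in_largest_Dq _ _ _ (even_mon deg)) => //.
  by move=> b p; apply: sym_closed.
by move=> b eb; rewrite /barf even_wdeg // mul1r.
Qed.
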